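(* Let $R$ be a ring with identity and $a,b,c,p,q\in R$, and suppose there exist $p',q'\in R$ with $q'qc=c$ and $bpp'=b$. The following are equivalent: (i) $paq$ is $(b,c)$-invertible; (ii) $pa$ is right $(qb,qc)$-invertible and $aq$ is left $(bp,cp)$-invertible. Moreover, if $y$ is the $(b,c)$-inverse of $paq$, $x$ is any right $(qb,qc)$-inverse of $pa$ and $z$ is any left $(bp,cp)$-inverse of $aq$, then $y=zax$.
   Context: For $x\in R$: $xR=\{xr:r\in R\}$, $Rx=\{rx:r\in R\}$. For $\alpha,b,c\in R$: $y$ is a left $(b,c)$-inverse of $\alpha$ if $Ry\subseteq Rc$ and $y\alpha b=b$; a right $(b,c)$-inverse if $yR\subseteq bR$ and $c\alpha y=c$; $\alpha$ is left/right $(b,c)$-invertible if such $y$ exists. $\alpha$ is $(b,c)$-invertible if there is $y\in R$ with $y\in (bRy)\cap(yRc)$, $y\alpha b=b$ and $c\alpha y=c$; such $y$ is unique and called the $(b,c)$-inverse of $\alpha$. *)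

(* Defs.v *)
From mathcomp Require Import all_boot all_algebra.
Set Implicit Arguments. Unset Strict Implicit. Unset Printing Implicit Defensive.
Import GRing.Theory.
Local Open Scope ring_scope.

Section BC.
Variable R : pzRingType.

Definition rsub (x y : R) : Prop := forall r : R, exists s : R, x * r = y * s.
Definition lsub (x y : R) : Prop := forall r : R, exists s : R, r * x = s * y.

Definition left_bc_inverse (a b c y : R) : Prop := lsub y c /\ y * a * b = b.
Definition right_bc_inverse (a b c y : R) : Prop := rsub y b /\ c * a * y = c.

Definition left_bc_invertible (a b c : R) : Prop := exists y, left_bc_inverse a b c y.
Definition right_bc_invertible (a b c : R) : Prop := exists y, right_bc_inverse a b c y.

Definition bc_inverse (a b c y : R) : Prop :=
  (exists r, y = b * r * y) /\ (exists s, y = y * s * c) /\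
  y * a * b = b /\ c * a * y = c.

Definition bc_invertible (a b c : R) : Prop := exists y, bc_inverse a b c y.
End BC.

(* Main.v *)
Require Import Defs.
From mathcomp Require Import all_boot all_algebra.
Local Open Scope ring_scope.
Import GRing.Theory.

Theorem theorem3p6 (R : pzRingType) (a b c p q p' q' : R)
  (hq : q' * q * c = c) (hp : b * p * p' = b) :
  (bc_invertible (p * a * q) b c <->
     (right_bc_invertible (p * a) (q * b) (q * c) /\
      left_bc_invertible (a * q) (b * p) (c * p))) /\
  (forall y x z : R,
     bc_inverse (p * a * q) b c y ->
     right_bc_inverse (p * a) (q * b) (q * c) x ->
     left_bc_inverse (a * q) (b * p) (c * p) z ->
     y = z * a * x).
Proof.
have key : forall x z, right_bc_inverse (p * a) (q * b) (q * c) x ->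
     left_bc_inverse (a * q) (b * p) (c * p) z ->
     (exists s, x = q * b * s) /\ (exists t, z = t * c * p) /\
     (forall w, w * c * p * a * x = w * c) /\ (forall w, w * z * a * q * b = w * b).
  move=> x z [hx1 hx2] [hz1 hz2].
  have [s Es] := hx1 1; rewrite mulr1 in Es.
  have [t Et] := hz1 1; rewrite mul1r mulrA in Et.
  split; first by exists s.
  split; first by exists t.
  have h0 : c * p * a * x = c.
    by have := congr1 (fun v => q' * v) hx2; rewrite /= !mulrA hq.
  have h1 : z * a * q * b = b.
    have := congr1 (fun v => v * p') hz2.
    by rewrite /= !mulrA hp -!mulrA (mulrA b p p') hp !mulrA.
  split.
    by move=> w; have := congr1 (fun v => w * v) h0; rewrite /= !mulrA.
  by move=> w; have := congr1 (fun v => w * v) h1; rewrite /= !mulrA.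
split.
  split.
    move=> [y [[r Hr] [[s' Hs] [Hyb Hyc]]]].
    split.
      exists (q * y); split.
        move=> r0; exists (r * y * r0).
        by rewrite {1}Hr !mulrA.
      have := congr1 (fun v => q * v) Hyc.
      by rewrite /= !mulrA.
    exists (y * p); split.
      move=> r0; exists (r0 * y * s').
      by rewrite {1}Hs !mulrA.
    have := congr1 (fun v => v * p) Hyb.
    by rewrite /= !mulrA.
  move=> [[x hx] [z hz]].
  have [[s Es] [[t Et] [Hc Hb]]] := key x z hx hz.
  have Hb1 : z * a * q * b = b.
    by have := Hb 1; rewrite !mul1r.
  have Hc1 : c * p * a * x = c.
    by have := Hc 1; rewrite !mul1r.
  exists (z * a * x).
  have Yb : z * a * x = b * s by rewrite Es !mulrA Hb1.
  have Yt : z * a * x = t * c by rewrite Et (Hc t).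
  set y := z * a * x in Yb Yt *.
  have HyB : y * (p * a * q) * b = b.
    by rewrite Yt !mulrA -Et Hb1.
  have HyC : c * (p * a * q) * y = c.
    by rewrite Yb !mulrA; rewrite Es !mulrA in Hc1.
  set al := p * a * q in HyB HyC *.
  have yay : y * al * y = y.
    by rewrite {2}Yb mulrA HyB -Yb.
  split.
    exists (s * al); by rewrite mulrA -Yb yay.
  split.
    exists (al * t); by rewrite mulrA -mulrA -Yt yay.
  by [].
move=> y x z [[r Hr] [[s' Hs] [Hyb Hyc]]] hx hz.
have [[s Es] [[t Et] [Hc Hb]]] := key x z hx hz.
have Hb1 : z * a * q * b = b.
  by have := Hb 1; rewrite !mul1r.
transitivity (y * p * a * x).
  by rewrite {1}Hs -(Hc (y * s')) -Hs.
rewrite Es !mulrA Hb1.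
by rewrite !mulrA in Hyb; rewrite Hyb.
Qed.
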